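(* Let $(\mathcal{X},\|\cdot\|)$ be a real Banach space, $P$ a probability distribution on a measurable space $\mathcal{E}$, and $Q,P_e:\mathcal{X}\to\mathcal{X}$ with $\|Q(\theta_1)-Q(\theta_2)\|\le\rho\|\theta_1-\theta_2\|$ ($\rho\in[0,1)$, $\theta^\star$ the unique fixed point of $Q$) and $\|P_e(\theta_1)-P_e(\theta_2)\|\le L\|\theta_1-\theta_2\|$ for all $e$ ($L\ge0$). Let $W_e:=\|P_e(\theta^\star)-\theta^\star\|$ and assume $\mathbb{E}[W_e]\le\sigma$ and $W_e\le M$ almost surely, where $0\le\sigma\le M$, and that $\gamma:=\rho L<1$. Let $\theta_0\in\mathcal{X}$, $e_0,e_1,\dots$ i.i.d. $\sim P$, $\theta_{t+1}=Q(P_{e_t}(\theta_t))$, and $R_0:=\|\theta_0-\theta^\star\|$. For every $r>\rho M/(1-\gamma)$ define $T_0(r):=0$ if $R_0\le r-\rho M/(1-\gamma)$, and otherwise \[T_0(r):=\left\lceil\frac{\log\big(R_0/(r-\rho M/(1-\gamma))\big)}{\log(1/\gamma)}\right\rceil.\] Then $\|\theta_t-\theta^\star\|\le r$ almost surely for all $t\ge T_0(r)$. *)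

(* Defs.v *)
From HB Require Import structures.
From mathcomp Require Import all_boot all_order all_algebra.
From mathcomp Require Import all_classical all_reals all_analysis.
Set Implicit Arguments. Unset Strict Implicit. Unset Printing Implicit Defensive.
Import Order.TTheory GRing.Theory Num.Theory.
Import numFieldNormedType.Exports.
Local Open Scope classical_set_scope.
Local Open Scope ring_scope.

Definition mutually_independent {R : realType} {dO dE : measure_display}
  {Omega : measurableType dO} {E : measurableType dE}
  (Pr : probability Omega R) (e : nat -> Omega -> E) : Prop :=
  forall (s : seq nat) (A : nat -> set E),
    uniq s -> (forall i, i \in s -> measurable (A i)) ->
    Pr (\big[setI/setT]_(i <- s) (e i @^-1` A i)) =
    (\prod_(i <- s) Pr (e i @^-1` A i))%E.

Definition identically_distributed_as {R : realType} {dO dE : measure_display}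
  {Omega : measurableType dO} {E : measurableType dE}
  (Pr : probability Omega R) (e : nat -> Omega -> E) (P : probability E R) : Prop :=
  forall t (A : set E), measurable A -> Pr (e t @^-1` A) = P A.

Fixpoint iterates {X Omega E : Type} (Q : X -> X) (Pe : E -> X -> X)
  (e : nat -> Omega -> E) (theta0 : X) (t : nat) (w : Omega) : X :=
  match t with
  | 0 => theta0
  | t'.+1 => Q (Pe (e t' w) (iterates Q Pe e theta0 t' w))
  end.

Definition T0 {R : realType} (R0 rho M gamma r : R) : int :=
  let c := rho * M / (1 - gamma) in
  if R0 <= r - c then 0%Z
  else Num.ceil (ln (R0 / (r - c)) / ln (gamma^-1)).

(* Main.v *)
Require Import Defs.
From HB Require Import structures.
From mathcomp Require Import all_boot all_order all_algebra.
From mathcomp Require Import all_classical all_reals all_analysis.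
From mathcomp Require Import ring lra.
Import Order.TTheory GRing.Theory Num.Theory.
Import numFieldNormedType.Exports.
Local Open Scope classical_set_scope.
Local Open Scope ring_scope.

Lemma geo (R : realType) (g R0 a : R) (t : nat) :
  0 < g -> g < 1 -> 0 <= R0 -> 0 < a ->
  ((if R0 <= a then 0%Z else Num.ceil (ln (R0 / a) / ln (g^-1))) <= t%:Z)%R ->
  g ^+ t * R0 <= a.
Proof.
move=> g0 g1 R00 a0.
have gt1 : g ^+ t <= 1 by apply: exprn_ile1; lra.
case: ifP => [Ra _|/negbT]; first by apply: le_trans Ra; rewrite ler_piMl.
rewrite -ltNge => aR Ht.
have R0p : 0 < R0 by lra.
have lg : 0 < ln g^-1 by apply: ln_gt0; rewrite invf_gt1 //.
have H1 : ln (R0 / a) / ln g^-1 <= t%:R.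
  apply: (le_trans (ceil_ge _)).
  by rewrite -(ler_int R) in Ht; rewrite -[t%:R]/((t%:Z)%:~R); exact: Ht.
rewrite ler_pdivrMr // in H1.
have : ln (R0 / a) <= ln ((g^-1) ^+ t).
  rewrite lnXn ?invr_gt0 // -mulr_natl. exact H1.
rewrite ler_ln ?posrE ?divr_gt0 ?exprn_gt0 ?invr_gt0 //.
rewrite ler_pdivrMr // exprVn => H.
have gtp : 0 < g ^+ t by rewrite exprn_gt0.
by rewrite -(ler_pM2l gtp) mulrA mulrV ?unitfE ?gt_eqF // mul1r in H.
Qed.

Theorem lemma4p13 (R : realType) (X : completeNormedModType R)
  (dE : measure_display) (E : measurableType dE) (P : probability E R)
  (Q : X -> X) (Pe : E -> X -> X) (rho L sigma M : R) (thetas : X)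
  (hrho0 : 0 <= rho) (hrho1 : rho < 1)
  (hQ : forall th1 th2, `|Q th1 - Q th2| <= rho * `|th1 - th2|)
  (hfix : Q thetas = thetas)
  (hL0 : 0 <= L)
  (hPe : forall e th1 th2, `|Pe e th1 - Pe e th2| <= L * `|th1 - th2|)
  (hsigma0 : 0 <= sigma) (hsigmaM : sigma <= M)
  (hmean : (\int[P]_(e in setT) (`|Pe e thetas - thetas|)%:E <= sigma%:E)%E)
  (hbound : {ae P, forall e, `|Pe e thetas - thetas| <= M})
  (hgamma0 : 0 < rho * L) (hgamma1 : rho * L < 1)
  (dO : measure_display) (Omega : measurableType dO) (Pr : probability Omega R)
  (e : nat -> Omega -> E)
  (he_meas : forall t, measurable_fun setT (e t))
  (he_ind : mutually_independent Pr e)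
  (he_dist : identically_distributed_as Pr e P)
  (theta0 : X) (r : R)
  (hr : rho * M / (1 - rho * L) < r) :
  {ae Pr, forall w, forall t : nat,
     (T0 `|theta0 - thetas| rho M (rho * L) r <= t%:Z)%R ->
     `|iterates Q Pe e theta0 t w - thetas| <= r}.
Proof.
have M0 : 0 <= M by lra.
set g := rho * L in hgamma0 hgamma1 hr *.
set c := rho * M / (1 - g) in hr *.
have hc : g * c + rho * M = c.
  rewrite /c; field; lra.
have c0 : 0 <= c by rewrite /c divr_ge0 //; [exact: mulr_ge0 | lra].
case: hbound => A [mA PA0 sub].
apply: (@negligibleS _ _ _ _ (\bigcup_k (e k @^-1` A))).
  move=> w /= Hw; apply: contrapT => Hn; apply: Hw => t.
  have good : forall k, `|Pe (e k w) thetas - thetas| <= M.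
    move=> k; apply: contrapT => /sub Ak; apply: Hn; by exists k.
  have D : forall k, `|iterates Q Pe e theta0 k w - thetas| <= g ^+ k * `|theta0 - thetas| + c.
    elim=> [|k IH] /=; first by rewrite expr0 mul1r; lra.
    rewrite -{1}hfix; apply: (le_trans (hQ _ _)).
    have h1 : `|Pe (e k w) (iterates Q Pe e theta0 k w) - thetas| <=
       L * `|iterates Q Pe e theta0 k w - thetas| + M.
      have -> : Pe (e k w) (iterates Q Pe e theta0 k w) - thetas =
        (Pe (e k w) (iterates Q Pe e theta0 k w) - Pe (e k w) thetas) +
        (Pe (e k w) thetas - thetas) by rewrite addrA subrK.
      apply: (le_trans (ler_normD _ _)); apply: lerD => //; exact: hPe.
    have h2 := ler_wpM2l hrho0 h1.
    apply: (le_trans h2).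
    rewrite exprS -mulrA.
    have h3 := ler_wpM2l (ltW hgamma0) IH.
    rewrite /g in h3 hc *. nra.
  move=> HT; apply: (le_trans (D t)).
  have := @geo R g `|theta0 - thetas| (r - c) t hgamma0 hgamma1 (normr_ge0 _) _ HT.
  move=> H; have : g ^+ t * `|theta0 - thetas| <= r - c by apply: H; lra.
  lra.
apply: negligible_bigcup => k.
exists (e k @^-1` A); split => //.
  by rewrite -[_ @^-1` _]setTI; apply: he_meas.
have := he_dist k A mA. rewrite PA0. by [].
Qed.
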